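(* Let $X$ be a Tychonoff space and $n\in\mathbb N$. Then $C_p(X,\mathbb R^n)$ is strictly H-bounded iff it is H-bounded iff it is strictly M-bounded iff it is M-bounded iff $X$ is pseudocompact. On the other hand, for every nonempty Tychonoff space $X$, $C_p(X,\mathbb R^\omega)$ is not H-bounded.
   Context: $C_p(X,Y)$ for a topological group $Y$ denotes the group of continuous maps $X\to Y$ under pointwise operation with the topology of pointwise convergence; $\mathbb R^\omega$ carries the product topology. For a topological group $G$ with identity $e$: M-bounded means for every sequence $(U_n)$ of neighborhoods of $e$ there are finite $A_n\subset G$ with $G=\bigcup_nA_nU_n$; H-bounded means there are finite $A_n$ with each $x\in G$ in all but finitely many $A_nU_n$. In the game where in round $n$ ONE picks a neighborhood $U_n$ of $e$ and TWO a finite $A_n\subset G$, $G$ is strictly M-bounded (resp. strictly H-bounded) if TWO has a strategy guaranteeing $G=\bigcup_nA_nU_n$ (resp. each $x\in G$ lies in all but finitely many $A_nU_n$). *)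

(* Defs.v *)
From Stdlib Require Import Reals List.
Open Scope R_scope.

Record topology (X : Type) := {
  is_open : (X -> Prop) -> Prop;
  open_full : is_open (fun _ => True);
  open_inter : forall U V, is_open U -> is_open V ->
                 is_open (fun x => U x /\ V x);
  open_union : forall F : (X -> Prop) -> Prop,
                 (forall U, F U -> is_open U) ->
                 is_open (fun x => exists U, F U /\ U x)
}.
Arguments is_open {X} t U.

Definition R_open (W : R -> Prop) : Prop :=
  forall p, W p -> exists eps, 0 < eps /\ forall q, Rabs (q - p) < eps -> W q.

Definition prod_open {I : Type} (W : (I -> R) -> Prop) : Prop :=
  forall p, W p -> exists (l : list I) (eps : R), 0 < eps /\
    forall q, (forall i, In i l -> Rabs (q i - p i) < eps) -> W q.

Definition continuous_R {X : Type} (T : topology X) (f : X -> R) : Prop :=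
  forall W, R_open W -> is_open T (fun x => W (f x)).

Definition continuous_prod {X I : Type} (T : topology X) (f : X -> I -> R) : Prop :=
  forall W, prod_open W -> is_open T (fun x => W (f x)).

Definition closed {X : Type} (T : topology X) (F : X -> Prop) : Prop :=
  is_open T (fun x => ~ F x).

Definition T1 {X : Type} (T : topology X) : Prop :=
  forall x : X, closed T (fun y => y = x).

Definition completely_regular {X : Type} (T : topology X) : Prop :=
  forall (F : X -> Prop) (x : X), closed T F -> ~ F x ->
    exists f : X -> R, continuous_R T f /\ f x = 0 /\
      (forall y, F y -> f y = 1) /\ (forall y, 0 <= f y <= 1).

Definition tychonoff {X : Type} (T : topology X) : Prop :=
  T1 T /\ completely_regular T.

Definition pseudocompact {X : Type} (T : topology X) : Prop :=
  forall f : X -> R, continuous_R T f -> exists M, forall x, Rabs (f x) <= M.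

(** * The group C_p(X, R^I)
    Elements: continuous maps X -> R^I (represented as X -> I -> R), with
    pointwise addition; identity = the zero map; topology of pointwise
    convergence. *)
Section Cp.
Context {X I : Type} (T : topology X).

Definition Cp (f : X -> I -> R) : Prop := continuous_prod T f.

Definition Cp_zero : X -> I -> R := fun _ _ => 0.

(** U is a neighbourhood of the identity in C_p(X,R^I): U is a subset of
    C_p(X,R^I) containing a finite intersection of subbasic open sets
    {g | g x_j \in V_j} (V_j open in R^I) which contains the zero map. *)
Definition Cp_nbhd0 (U : (X -> I -> R) -> Prop) : Prop :=
  (forall g, U g -> Cp g) /\
  exists l : list (X * ((I -> R) -> Prop)),
    (forall p, In p l -> prod_open (snd p) /\ snd p (Cp_zero (fst p))) /\
    forall g, Cp g -> (forall p, In p l -> snd p (g (fst p))) -> U g.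

Definition in_prod_set (A : list (X -> I -> R)) (U : (X -> I -> R) -> Prop)
  (x : X -> I -> R) : Prop :=
  exists a u, In a A /\ U u /\ x = (fun t i => a t i + u t i).

Definition finite_subset (A : list (X -> I -> R)) : Prop :=
  forall a, In a A -> Cp a.

Definition M_bounded : Prop :=
  forall U : nat -> (X -> I -> R) -> Prop, (forall n, Cp_nbhd0 (U n)) ->
  exists A : nat -> list (X -> I -> R), (forall n, finite_subset (A n)) /\
    forall x, Cp x -> exists n, in_prod_set (A n) (U n) x.

Definition H_bounded : Prop :=
  forall U : nat -> (X -> I -> R) -> Prop, (forall n, Cp_nbhd0 (U n)) ->
  exists A : nat -> list (X -> I -> R), (forall n, finite_subset (A n)) /\
    forall x, Cp x -> exists N, forall n, (N <= n)%nat -> in_prod_set (A n) (U n) x.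

(** Strategies for TWO: the move A_n is a function of ONE's moves
    U_0, ..., U_n (TWO's own earlier moves are determined by these). *)
Definition history (U : nat -> (X -> I -> R) -> Prop) (n : nat) :=
  map U (seq 0 (S n)).

Definition strictly_M_bounded : Prop :=
  exists sigma : list ((X -> I -> R) -> Prop) -> list (X -> I -> R),
  forall U : nat -> (X -> I -> R) -> Prop, (forall n, Cp_nbhd0 (U n)) ->
    (forall n, finite_subset (sigma (history U n))) /\
    forall x, Cp x -> exists n, in_prod_set (sigma (history U n)) (U n) x.

Definition strictly_H_bounded : Prop :=
  exists sigma : list ((X -> I -> R) -> Prop) -> list (X -> I -> R),
  forall U : nat -> (X -> I -> R) -> Prop, (forall n, Cp_nbhd0 (U n)) ->
    (forall n, finite_subset (sigma (history U n))) /\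
    forall x, Cp x -> exists N, forall n, (N <= n)%nat ->
      in_prod_set (sigma (history U n)) (U n) x.
End Cp.

(** Index types: R^n uses {k | k < n}, R^omega uses nat. *)
Definition fin (n : nat) : Type := {k : nat | (k < n)%nat}.

(* Main.v *)
Require Import Defs.
From Stdlib Require Import Reals List Lra Lia.
From Stdlib Require Import Classical ClassicalEpsilon FunctionalExtensionality PropExtensionality ProofIrrelevance.
Open Scope R_scope.

Section Basics.
Context {X : Type} (T : topology X).

Lemma open_ext (U V : X -> Prop) : is_open T U -> (forall y, U y <-> V y) -> is_open T V.
Proof.
  intros HU H. replace V with U; auto.
  apply functional_extensionality; intro y; apply propositional_extensionality; apply H.
Qed.

Lemma open_local (S : X -> Prop) :
  (forall x, S x -> exists U, is_open T U /\ U x /\ forall y, U y -> S y) -> is_open T S.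
Proof.
  intros H.
  pose proof (open_union _ T (fun U => is_open T U /\ forall y, U y -> S y) (fun U HU => proj1 HU)) as Ho.
  apply (open_ext _ _ Ho). intro y; split.
  - intros [U [[_ HU] Uy]]; auto.
  - intros Sy. destruct (H y Sy) as [U [HU [Uy HUS]]]. exists U; auto.
Qed.

Definition cont_loc (f : X -> R) : Prop :=
  forall x eps, 0 < eps -> exists U, is_open T U /\ U x /\ forall y, U y -> Rabs (f y - f x) < eps.

Lemma cont_R_loc f : continuous_R T f <-> cont_loc f.
Proof.
  split.
  - intros Hf x eps Heps.
    exists (fun y => Rabs (f y - f x) < eps). split; [|split].
    + apply (Hf (fun q => Rabs (q - f x) < eps)).
      intros p Hp. cbv beta in Hp. exists (eps - Rabs (p - f x)). split; [lra|].
      intros q Hq.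
      pose proof (Rabs_triang (q - p) (p - f x)) as H.
      replace (q - p + (p - f x)) with (q - f x) in H by ring. lra.
    + cbv beta. rewrite Rminus_diag, Rabs_R0; lra.
    + auto.
  - intros Hf W HW. apply open_local. intros x Hx.
    destruct (HW _ Hx) as [eps [Heps HWe]].
    destruct (Hf x eps Heps) as [U [HU [Ux HUy]]].
    exists U; repeat split; auto.
Qed.

Lemma list_nbhd {J : Type} (g : X -> J -> R) (l : list J) x eps :
  0 < eps -> (forall i, cont_loc (fun y => g y i)) ->
  exists U, is_open T U /\ U x /\ forall y, U y -> forall i, In i l -> Rabs (g y i - g x i) < eps.
Proof.
  intros Heps Hg. induction l as [|i l IH].
  - exists (fun _ => True). split; [apply open_full|]. split; [trivial|]. intros y _ i [].
  - destruct IH as [U [HU [Ux HUy]]].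
    destruct (Hg i x eps Heps) as [V [HV [Vx HVy]]].
    exists (fun y => V y /\ U y). split; [apply open_inter; auto|]. split; [split; auto|].
    intros y [Vy Uy] j [<-|Hj]; auto.
Qed.

Lemma Cp_coords {J : Type} (g : X -> J -> R) : Cp T g <-> forall i, cont_loc (fun y => g y i).
Proof.
  unfold Cp, continuous_prod. split.
  - intros Hg i x eps Heps.
    exists (fun y => Rabs (g y i - g x i) < eps). split; [|split].
    + apply (Hg (fun q => Rabs (q i - g x i) < eps)).
      intros p Hp. cbv beta in Hp. exists (i :: nil), (eps - Rabs (p i - g x i)). split; [lra|].
      intros q Hq. specialize (Hq i (or_introl eq_refl)).
      pose proof (Rabs_triang (q i - p i) (p i - g x i)) as H.
      replace (q i - p i + (p i - g x i)) with (q i - g x i) in H by ring. lra.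
    + cbv beta. rewrite Rminus_diag, Rabs_R0; lra.
    + auto.
  - intros Hg W HW. apply open_local. intros x Hx.
    destruct (HW _ Hx) as [l [eps [Heps HWe]]].
    destruct (list_nbhd g l x eps Heps Hg) as [U [HU [Ux HUy]]].
    exists U; repeat split; auto.
Qed.

Lemma Cp_coord {J : Type} (g : X -> J -> R) i : Cp T g -> cont_loc (fun y => g y i).
Proof. intro H. exact (proj1 (Cp_coords g) H i). Qed.

Lemma coord_Cp {J : Type} (g : X -> J -> R) : (forall i, cont_loc (fun y => g y i)) -> Cp T g.
Proof. intro H. exact (proj2 (Cp_coords g) H). Qed.

Lemma cl_ext f g : cont_loc f -> (forall y, f y = g y) -> cont_loc g.
Proof.
  intros Hf H. replace g with f; auto. apply functional_extensionality; auto.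
Qed.

Lemma cl_const c : cont_loc (fun _ => c).
Proof.
  intros x eps Heps. exists (fun _ => True). split; [apply open_full|]. split; [trivial|].
  intros; rewrite Rminus_diag, Rabs_R0; lra.
Qed.

Lemma cl_add f g : cont_loc f -> cont_loc g -> cont_loc (fun y => f y + g y).
Proof.
  intros Hf Hg x eps Heps.
  destruct (Hf x (eps/2)) as [U [HU [Ux HUy]]]; [lra|].
  destruct (Hg x (eps/2)) as [V [HV [Vx HVy]]]; [lra|].
  exists (fun y => U y /\ V y). split; [apply open_inter; auto|]. split; [auto|].
  intros y [Uy Vy]. specialize (HUy y Uy). specialize (HVy y Vy).
  pose proof (Rabs_triang (f y - f x) (g y - g x)).
  replace (f y + g y - (f x + g x)) with (f y - f x + (g y - g x)) by ring. lra.
Qed.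

Lemma cl_scal c f : cont_loc f -> cont_loc (fun y => c * f y).
Proof.
  intros Hf x eps Heps.
  pose proof (Rabs_pos c) as Hc.
  destruct (Hf x (eps / (Rabs c + 1))) as [U [HU [Ux HUy]]].
  { apply Rdiv_lt_0_compat; lra. }
  exists U. split; auto. split; auto. intros y Uy. specialize (HUy y Uy).
  replace (c * f y - c * f x) with (c * (f y - f x)) by ring.
  rewrite Rabs_mult.
  assert (H1 : Rabs c * Rabs (f y - f x) <= Rabs c * (eps / (Rabs c + 1))).
  { apply Rmult_le_compat_l; lra. }
  assert (H2 : Rabs c * (eps / (Rabs c + 1)) < eps).
  { set (a := Rabs c) in *.
    replace (a * (eps / (a + 1))) with (eps * (a / (a + 1))) by (field; lra).
    assert (a / (a + 1) < 1).
    { unfold Rdiv. apply (Rmult_lt_reg_r (a+1)); [lra|].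
      rewrite Rmult_assoc, Rinv_l; lra. }
    nra. }
  lra.
Qed.

Lemma cl_sub f g : cont_loc f -> cont_loc g -> cont_loc (fun y => f y - g y).
Proof.
  intros Hf Hg. apply (cl_ext (fun y => f y + (-1) * g y)).
  - apply cl_add; auto. apply cl_scal; auto.
  - intro; ring.
Qed.

Lemma cl_abs f : cont_loc f -> cont_loc (fun y => Rabs (f y)).
Proof.
  intros Hf x eps Heps. destruct (Hf x eps Heps) as [U [HU [Ux HUy]]].
  exists U; split; auto; split; auto. intros y Uy.
  eapply Rle_lt_trans; [apply Rabs_triang_inv2| auto].
Qed.

Lemma cl_comp (phi : R -> R) g : cont_loc g ->
  (forall s0 eps, 0 < eps -> exists d, 0 < d /\ forall s, Rabs (s - s0) < d -> Rabs (phi s - phi s0) < eps) ->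
  cont_loc (fun y => phi (g y)).
Proof.
  intros Hg Hphi x eps Heps. destruct (Hphi (g x) eps Heps) as [d [Hd Hs]].
  destruct (Hg x d Hd) as [U [HU [Ux HUy]]].
  exists U; split; auto; split; auto.
Qed.

End Basics.

Lemma grid_aux (d : R) (K : nat) : 0 < d -> forall r, 0 <= r <= INR K * d ->
  exists k, (k <= K)%nat /\ Rabs (r - INR k * d) < d.
Proof.
  intros Hd. induction K as [|K IH]; intros r Hr.
  - exists 0%nat. split; [lia|]. simpl in *.
    replace (r - 0 * d) with 0 by lra. rewrite Rabs_R0; lra.
  - destruct (Rle_dec r (INR K * d)).
    + destruct (IH r) as [k [Hk Hr']]; [lra|]. exists k; split; [lia|auto].
    + exists (S K). split; [lia|]. rewrite S_INR in *. apply Rabs_def1; nra.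
Qed.

Lemma grid (N d : R) : 0 < d -> exists G, forall r, Rabs r <= N -> exists c, In c G /\ Rabs (r - c) < d.
Proof.
  intros Hd. destruct (INR_unbounded (2 * N / d)) as [K HK].
  exists (map (fun k => -N + INR k * d) (seq 0 (S K))).
  intros r Hr.
  pose proof (Rle_abs r). pose proof (Rle_abs (-r)). rewrite Rabs_Ropp in *.
  assert (HKd : 2 * N <= INR K * d).
  { apply (Rmult_lt_compat_r d) in HK; auto. unfold Rdiv in HK.
    rewrite Rmult_assoc, Rinv_l in HK; lra. }
  destruct (grid_aux d K Hd (r + N)) as [k [Hk Hrk]]; [lra|].
  exists (-N + INR k * d). split.
  - apply in_map_iff. exists k. split; auto. apply in_seq. lia.
  - replace (r - (-N + INR k * d)) with (r + N - INR k * d) by ring. auto.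
Qed.

Lemma list_bound {A : Type} (h : A -> R) (L : list A) : exists B, 0 <= B /\ forall a, In a L -> Rabs (h a) <= B.
Proof.
  induction L as [|a L [B [HB HBa]]].
  - exists 0. split; [lra| intros a []].
  - exists (Rmax (Rabs (h a)) B). split.
    + eapply Rle_trans; [apply HB| apply Rmax_r].
    + intros b [<-|Hb]; [apply Rmax_l|]. eapply Rle_trans; [apply HBa; auto| apply Rmax_r].
Qed.

Section Tych.
Context {X : Type} (T : topology X).

Lemma closed_pts (HT1 : T1 T) x (Q : list X) : closed T (fun y => In y Q /\ y <> x).
Proof.
  unfold closed. induction Q as [|q Q IH].
  - apply (open_ext T (fun _ => True)); [apply open_full|]. intros y; split; [intros _ [[] _] | auto].
  - destruct (classic (q = x)) as [Hq|Hq].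
    + apply (open_ext T _ _ IH). intro y. simpl. split.
      * intros H [[Hy|Hy] Hyx]; [subst; congruence| apply H; auto].
      * intros H [Hy Hyx]. apply H; auto.
    + apply (open_ext T (fun y => (fun y => y = q -> False) y /\ (fun y => ~ (In y Q /\ y <> x)) y)).
      * apply open_inter; [apply (HT1 q) | exact IH].
      * intro y; simpl; split.
        -- intros [H1 H2] [[Hy|Hy] Hyx]; [subst; auto | apply H2; auto].
        -- intros H; split; [intro; subst; apply H; auto | intros [Hy Hyx]; apply H; auto].
Qed.

Lemma bump (HT : tychonoff T) x (Q : list X) :
  exists psi, cont_loc T psi /\ psi x = 1 /\ forall y, In y Q -> y <> x -> psi y = 0.
Proof.
  destruct HT as [HT1 HCR].
  destruct (HCR (fun y => In y Q /\ y <> x) x (closed_pts HT1 x Q)) as [f [Hf [Hfx [HF _]]]].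
  { intros [_ H]; auto. }
  exists (fun y => 1 - f y). split; [|split].
  - apply cl_sub; [apply cl_const| apply cont_R_loc; auto].
  - rewrite Hfx; ring.
  - intros y Hy Hyx. rewrite HF; [ring| auto].
Qed.

Lemma bump_pair {J : Type} (HT : tychonoff T) (x : X) (i : J) (P : list (X * J)) :
  ~ In (x, i) P ->
  exists Phi : X -> J -> R, Cp T Phi /\ Phi x i = 1 /\ forall p, In p P -> Phi (fst p) (snd p) = 0.
Proof.
  intros Hn. destruct (bump HT x (map fst P)) as [psi [Hpsi [Hx H0]]].
  exists (fun y j => if excluded_middle_informative (j = i) then psi y else 0).
  split; [|split].
  - apply coord_Cp. intro j. destruct (excluded_middle_informative (j = i)); [exact Hpsi| apply cl_const].
  - destruct (excluded_middle_informative (i = i)); [exact Hx| congruence].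
  - intros [y j] Hp. simpl. destruct (excluded_middle_informative (j = i)) as [e|e]; auto.
    subst j. apply H0. apply (in_map fst _ _ Hp). intro; subst; auto.
Qed.

Lemma interp {J : Type} (HT : tychonoff T) (d N : R) : 0 < d -> 0 <= N -> forall P : list (X * J),
  exists A : list (X -> J -> R), (forall a, In a A -> Cp T a) /\
   forall v : X -> J -> R, (forall p, In p P -> Rabs (v (fst p) (snd p)) <= N) ->
   exists a, In a A /\ forall p, In p P -> Rabs (a (fst p) (snd p) - v (fst p) (snd p)) < d.
Proof.
  intros Hd HN P. induction P as [|[x i] P IH].
  - exists ((fun _ _ => 0) :: nil). split.
    + intros a [<-|[]]. apply coord_Cp; intro; apply cl_const.
    + intros v _. exists (fun _ _ => 0). split; [left; auto| intros _ []].
  - destruct IH as [A [HA HAv]].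
    destruct (classic (In (x, i) P)) as [Hin|Hin].
    + exists A. split; auto. intros v Hv. destruct (HAv v) as [a [Ha Hap]].
      { intros p Hp; apply Hv; right; auto. }
      exists a; split; auto. intros p [<-|Hp]; [apply (Hap _ Hin)| auto].
    + destruct (bump_pair HT x i P Hin) as [Phi [HPhi [HPx HP0]]].
      destruct (list_bound (fun a : X -> J -> R => a x i) A) as [B [HB HBa]].
      destruct (grid (N + B) d Hd) as [G HG].
      exists (flat_map (fun a => map (fun c => fun y j => a y j + c * Phi y j) G) A).
      split.
      * intros a' Ha'. apply in_flat_map in Ha'. destruct Ha' as [a [Ha Hc]].
        apply in_map_iff in Hc. destruct Hc as [c [<- Hc]].
        apply coord_Cp. intro j.
        apply (cl_add T (fun y => a y j) (fun y => c * Phi y j)).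
        -- apply Cp_coord. apply HA; auto.
        -- apply cl_scal. apply Cp_coord; auto.
      * intros v Hv. destruct (HAv v) as [a [Ha Hap]]. { intros p Hp; apply Hv; right; auto. }
        destruct (HG (v x i - a x i)) as [c [Hc Hrc]].
        { specialize (Hv (x,i) (or_introl eq_refl)). simpl in Hv. specialize (HBa a Ha). simpl in HBa.
          pose proof (Rabs_triang (v x i) (- a x i)) as H. rewrite Rabs_Ropp in H. unfold Rminus. lra. }
        exists (fun y j => a y j + c * Phi y j). split.
        -- apply in_flat_map. exists a. split; auto. apply in_map_iff. exists c; auto.
        -- intros p [<-|Hp]; simpl.
           ++ rewrite HPx. replace (a x i + c * 1 - v x i) with (-(v x i - a x i - c)) by ring.
              rewrite Rabs_Ropp. auto.
           ++ rewrite (HP0 p Hp). rewrite Rmult_0_r, Rplus_0_r. auto.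
Qed.

Lemma nbhd_box {J : Type} (l : list (X * ((J -> R) -> Prop))) :
  (forall p, In p l -> prod_open (snd p) /\ snd p (Cp_zero (fst p))) ->
  exists (P : list (X * J)) (d : R), 0 < d /\
   forall g : X -> J -> R, (forall q, In q P -> Rabs (g (fst q) (snd q)) < d) ->
     forall p, In p l -> snd p (g (fst p)).
Proof.
  induction l as [|[x V] l IH]; intros Hl.
  - exists nil, 1. split; [lra|]. intros g _ p [].
  - destruct IH as [P [d [Hd HP]]]. { intros p Hp; apply Hl; right; auto. }
    destruct (Hl (x,V) (or_introl eq_refl)) as [HV HV0]. simpl in HV, HV0.
    destruct (HV _ HV0) as [li [e [He HVe]]].
    exists (map (fun i => (x,i)) li ++ P), (Rmin e d). split; [apply Rmin_pos; auto|].
    intros g Hg p [<-|Hp].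
    + simpl. apply HVe. intros i Hi. unfold Cp_zero. rewrite Rminus_0_r.
      eapply Rlt_le_trans; [apply (Hg (x,i)) | apply Rmin_l].
      apply in_or_app; left. apply in_map_iff. exists i; auto.
    + apply HP; auto. intros q Hq. eapply Rlt_le_trans; [apply Hg | apply Rmin_r].
      apply in_or_app; right; auto.
Qed.

Definition Good {J : Type} (U : (X -> J -> R) -> Prop) (N : R) (A : list (X -> J -> R)) : Prop :=
  finite_subset T A /\ forall f, Cp T f -> (forall x i, Rabs (f x i) <= N) -> in_prod_set A U f.

Lemma good_exists {J : Type} (HT : tychonoff T) (U : (X -> J -> R) -> Prop) N :
  Cp_nbhd0 T U -> 0 <= N -> exists A, Good U N A.
Proof.
  intros [HU [l [Hl Hlu]]] HN.
  destruct (nbhd_box l Hl) as [P [d [Hd HPd]]].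
  destruct (interp HT d N Hd HN P) as [A [HA HAv]].
  exists A. split; [exact HA|].
  intros f Hf Hb. destruct (HAv f) as [a [Ha Hap]]. { intros p _; apply Hb. }
  exists a, (fun t i => f t i - a t i). split; [auto|split].
  - apply Hlu.
    + apply coord_Cp. intro i. apply (cl_sub T (fun y => f y i) (fun y => a y i));
        apply Cp_coord; auto.
    + apply (HPd (fun t i => f t i - a t i)). intros q Hq. cbv beta. rewrite Rabs_minus_sym. apply Hap; auto.
  - apply functional_extensionality; intro t; apply functional_extensionality; intro i; ring.
Qed.

Lemma bound_fin n : pseudocompact T -> forall f : X -> fin n -> R, Cp T f ->
  exists M, forall x i, Rabs (f x i) <= M.
Proof.
  intros Hpc f Hf.
  assert (H : forall k, exists M, forall x (i : fin n), (proj1_sig i < k)%nat -> Rabs (f x i) <= M).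
  { induction k as [|k [M HM]].
    - exists 0. intros x i Hi; lia.
    - destruct (Compare_dec.lt_dec k n) as [Hk|Hk].
      + destruct (Hpc (fun y => f y (exist _ k Hk))) as [Mk HMk].
        { apply cont_R_loc. apply Cp_coord; auto. }
        exists (Rmax M Mk). intros x [j Hj] Hjk. simpl in Hjk.
        destruct (Nat.eq_dec j k) as [->|Hne].
        * rewrite (proof_irrelevance _ Hj Hk). eapply Rle_trans; [apply HMk | apply Rmax_r].
        * eapply Rle_trans; [apply (HM x (exist _ j Hj)); simpl; lia | apply Rmax_l].
      + exists M. intros x [j Hj] Hjk. simpl in Hjk. apply (HM x (exist _ j Hj)). simpl; lia. }
  destruct (H n) as [M HM]. exists M. intros x [j Hj]. apply HM. simpl; auto.
Qed.

Lemma pc_strictH (n : nat) (HT : tychonoff T) : pseudocompact T -> @strictly_H_bounded X (fin n) T.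
Proof.
  intros Hpc.
  exists (fun h => epsilon (inhabits nil) (fun A => Good (last h (fun _ => True)) (INR (length h)) A)).
  intros U HU.
  assert (Hg : forall m, Good (U m) (INR (S m)) (epsilon (inhabits nil)
     (fun A => Good (last (history U m) (fun _ => True)) (INR (length (history U m))) A))).
  { intro m. unfold history. rewrite length_map, length_seq.
    rewrite seq_S, map_app. simpl. rewrite last_last.
    apply epsilon_spec. apply good_exists; auto. exact (pos_INR (S m)). }
  split.
  - intro m. apply (Hg m).
  - intros f Hf. destruct (bound_fin n Hpc f Hf) as [M HM].
    destruct (INR_unbounded M) as [N0 HN0].
    exists N0. intros m Hm. apply (Hg m); auto.
    intros x i. eapply Rle_trans; [apply HM|].
    assert (INR N0 <= INR (S m)) by (apply le_INR; lia). lra.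
Qed.

End Tych.

Section Escape.
Context {X : Type} (T : topology X).

Definition Ub {J : Type} (x0 : X) (i0 : J) : (X -> J -> R) -> Prop :=
  fun u => Cp T u /\ Rabs (u x0 i0) < 1.

Lemma Ub_nbhd {J : Type} (x0 : X) (i0 : J) : Cp_nbhd0 T (Ub x0 i0).
Proof.
  split; [intros g [Hg _]; auto|].
  exists ((x0, fun q : J -> R => Rabs (q i0) < 1) :: nil). split.
  - intros p [<-|[]]. simpl. split.
    + intros q Hq. exists (i0::nil), (1 - Rabs (q i0)). split; [lra|].
      intros q' Hq'. specialize (Hq' i0 (or_introl eq_refl)).
      pose proof (Rabs_triang (q' i0 - q i0) (q i0)) as H.
      replace (q' i0 - q i0 + q i0) with (q' i0) in H by ring. lra.
    + unfold Cp_zero. rewrite Rabs_R0; lra.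
  - intros g Hg Hp. split; auto. apply (Hp _ (or_introl eq_refl)).
Qed.

Definition mx {J : Type} (A : list (X -> J -> R)) (x0 : X) (i0 : J) : R :=
  fold_right (fun a m => Rmax (Rabs (a x0 i0)) m) 0 A.

Lemma mx_ge {J : Type} (A : list (X -> J -> R)) x0 i0 a : In a A -> Rabs (a x0 i0) <= mx A x0 i0.
Proof.
  induction A as [|b A IH]; [intros []|].
  intros [<-|Ha]; simpl; [apply Rmax_l|]. eapply Rle_trans; [apply IH; auto| apply Rmax_r].
Qed.

Lemma escape {J : Type} (A : list (X -> J -> R)) x0 i0 h :
  (forall a, In a A -> Rabs (a x0 i0) + 1 <= Rabs (h x0 i0)) -> ~ in_prod_set A (Ub x0 i0) h.
Proof.
  intros Hb [a [u [Ha [[_ Hu] ->]]]]. specialize (Hb a Ha). cbv beta in Hb.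
  pose proof (Rabs_triang (a x0 i0) (u x0 i0)). lra.
Qed.

Lemma not_H_omega (x0 : X) : ~ @H_bounded X nat T.
Proof.
  intros H. destruct (H (fun m => Ub x0 m) (fun m => Ub_nbhd x0 m)) as [A [HA HAx]].
  destruct (HAx (fun (_ : X) (i : nat) => 1 + mx (A i) x0 i)) as [N HN].
  - apply coord_Cp. intro i. apply cl_const.
  - apply (escape (A N) x0 N (fun (_ : X) (i : nat) => 1 + mx (A i) x0 i)); [| apply HN; lia].
    intros a Ha. eapply Rle_trans; [|apply Rle_abs]. pose proof (mx_ge (A N) x0 N a Ha). lra.
Qed.

End Escape.

Fixpoint xseq {X : Type} (g : X -> R) (s : R -> X) (k : nat) : X :=
  match k with O => s 0 | S k => s (g (xseq g s k) + 2) end.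

Lemma xseq_incr {X : Type} (g : X -> R) s (Hs : forall M, M < g (s M)) :
  forall j k, (j < k)%nat -> g (xseq g s j) + 2 <= g (xseq g s k).
Proof.
  intros j k Hjk. induction Hjk as [|k Hjk IH].
  - simpl. apply Rlt_le, Hs.
  - simpl. pose proof (Hs (g (xseq g s k) + 2)). lra.
Qed.

Lemma xseq_ge {X : Type} (g : X -> R) s (Hs : forall M, M < g (s M)) :
  forall k, INR k <= g (xseq g s k).
Proof.
  induction k as [|k IH].
  - simpl. apply Rlt_le, Hs.
  - rewrite S_INR. simpl. pose proof (Hs (g (xseq g s k) + 2)). lra.
Qed.

Section Phi.
Variables (t r : nat -> R).
Hypothesis Hsp : forall j k, j <> k -> 2 <= Rabs (t j - t k).
Hypothesis Htk : forall k, INR k <= t k.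

Definition phi (s : R) : R :=
  match excluded_middle_informative (exists k, Rabs (s - t k) < 1/2) with
  | left H => r (proj1_sig (constructive_indefinite_description _ H)) *
              (1 - 2 * Rabs (s - t (proj1_sig (constructive_indefinite_description _ H))))
  | right _ => 0
  end.

Lemma phi_in s k : Rabs (s - t k) < 1/2 -> phi s = r k * (1 - 2 * Rabs (s - t k)).
Proof.
  intros Hk. unfold phi. destruct (excluded_middle_informative _) as [H|H]; [| exfalso; apply H; eauto].
  destruct (constructive_indefinite_description _ H) as [k' Hk']. simpl.
  destruct (classic (k' = k)) as [->|Hne]; auto. exfalso.
  specialize (Hsp k' k Hne).
  pose proof (Rabs_triang (t k' - s) (s - t k)) as H1.
  replace (t k' - s + (s - t k)) with (t k' - t k) in H1 by ring.
  rewrite (Rabs_minus_sym (t k') s) in H1. lra.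
Qed.

Lemma phi_out s : (forall k, 1/2 <= Rabs (s - t k)) -> phi s = 0.
Proof.
  intros Hk. unfold phi. destruct (excluded_middle_informative _) as [H|H]; auto.
  exfalso. destruct H as [k H]. specialize (Hk k). lra.
Qed.

Lemma phi_lip s s0 B : 0 <= B -> Rabs (s - s0) < 1 ->
  (forall k, Rabs (s - t k) < 1/2 -> Rabs (r k) <= B) ->
  (forall k, Rabs (s0 - t k) < 1/2 -> Rabs (r k) <= B) ->
  Rabs (phi s - phi s0) <= 2 * B * Rabs (s - s0).
Proof.
  intros HB0 Hss B1 B2.
  assert (HB : forall k, Rabs (s - t k) < 1/2 -> 0 <= B).
  { intros k Hk. specialize (B1 k Hk). pose proof (Rabs_pos (r k)). lra. }
  pose proof (Rabs_pos (s - s0)).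
  destruct (classic (exists k, Rabs (s - t k) < 1/2)) as [[k Hk]|Hn];
  destruct (classic (exists k, Rabs (s0 - t k) < 1/2)) as [[k0 Hk0]|Hn0].
  - rewrite (phi_in s k Hk), (phi_in s0 k0 Hk0).
    destruct (classic (k = k0)) as [<-|Hne].
    + replace (r k * (1 - 2 * Rabs (s - t k)) - r k * (1 - 2 * Rabs (s0 - t k)))
        with (r k * (2 * (Rabs (s0 - t k) - Rabs (s - t k)))) by ring.
      rewrite Rabs_mult, Rabs_mult, (Rabs_right 2) by lra.
      pose proof (Rabs_triang_inv2 (s0 - t k) (s - t k)) as H1.
      replace (s0 - t k - (s - t k)) with (-(s - s0)) in H1 by ring. rewrite Rabs_Ropp in H1.
      specialize (B1 k Hk). pose proof (Rabs_pos (r k)).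
      pose proof (Rabs_pos (Rabs (s0 - t k) - Rabs (s - t k))).
      assert (Rabs (r k) * Rabs (Rabs (s0 - t k) - Rabs (s - t k)) <= B * Rabs (s - s0)).
      { apply Rmult_le_compat; auto. }
      lra.
    + exfalso. specialize (Hsp k k0 Hne).
      pose proof (Rabs_triang (t k - s) (s - t k0)) as H1.
      pose proof (Rabs_triang (s - s0) (s0 - t k0)) as H2.
      replace (t k - s + (s - t k0)) with (t k - t k0) in H1 by ring.
      replace (s - s0 + (s0 - t k0)) with (s - t k0) in H2 by ring.
      rewrite (Rabs_minus_sym (t k) s) in H1. lra.
  - rewrite (phi_in s k Hk), (phi_out s0).
    2:{ intro j. apply Rnot_lt_le. intro; apply Hn0; eauto. }
    rewrite Rminus_0_r, Rabs_mult.
    assert (Hs0 : 1/2 <= Rabs (s0 - t k)) by (apply Rnot_lt_le; intro; apply Hn0; eauto).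
    pose proof (Rabs_triang (s0 - s) (s - t k)) as H1.
    replace (s0 - s + (s - t k)) with (s0 - t k) in H1 by ring. rewrite (Rabs_minus_sym s0 s) in H1.
    rewrite (Rabs_right (1 - 2 * Rabs (s - t k))) by lra.
    specialize (B1 k Hk). pose proof (Rabs_pos (r k)). nra.
  - rewrite (phi_out s), (phi_in s0 k0 Hk0).
    2:{ intro j. apply Rnot_lt_le. intro; apply Hn; eauto. }
    rewrite Rminus_0_l, Rabs_Ropp, Rabs_mult.
    assert (Hs : 1/2 <= Rabs (s - t k0)) by (apply Rnot_lt_le; intro; apply Hn; eauto).
    pose proof (Rabs_triang (s - s0) (s0 - t k0)) as H1.
    replace (s - s0 + (s0 - t k0)) with (s - t k0) in H1 by ring.
    rewrite (Rabs_right (1 - 2 * Rabs (s0 - t k0))) by lra.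
    specialize (B2 k0 Hk0). pose proof (Rabs_pos (r k0)).
    assert (0 <= B) by lra. nra.
  - rewrite (phi_out s), (phi_out s0).
    2:{ intro j. apply Rnot_lt_le. intro; apply Hn0; eauto. }
    2:{ intro j. apply Rnot_lt_le. intro; apply Hn; eauto. }
    rewrite Rminus_0_r, Rabs_R0.
    nra.
Qed.

End Phi.

Lemma phi_cont (t r : nat -> R) (Hsp : forall j k, j <> k -> 2 <= Rabs (t j - t k))
  (Htk : forall k, INR k <= t k) :
  forall s0 eps, 0 < eps -> exists d, 0 < d /\ forall s, Rabs (s - s0) < d ->
    Rabs (phi t r s - phi t r s0) < eps.
Proof.
  intros s0 eps Heps.
  destruct (INR_unbounded (s0 + 2)) as [K HK].
  destruct (list_bound r (seq 0 K)) as [B [HB HBr]].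
  assert (Hq : 0 < eps / (2 * B + 2)) by (apply Rdiv_lt_0_compat; lra).
  exists (Rmin (1/2) (eps / (2 * B + 2))). split; [apply Rmin_pos; lra|].
  intros s Hs.
  pose proof (Rmin_l (1/2) (eps / (2 * B + 2))). pose proof (Rmin_r (1/2) (eps / (2 * B + 2))).
  assert (Hbd : forall u, Rabs (u - s0) < 1 -> forall k, Rabs (u - t k) < 1/2 -> Rabs (r k) <= B).
  { intros u Hu k Hk. apply HBr. apply in_seq. split; [lia|]. simpl.
    apply INR_lt. pose proof (Htk k).
    pose proof (Rle_abs (u - s0)). pose proof (Rle_abs (-(u - t k))). rewrite Rabs_Ropp in *. lra. }
  assert (Hlip := phi_lip t r Hsp s s0 B HB).
  assert (H1 : Rabs (phi t r s - phi t r s0) <= 2 * B * Rabs (s - s0)).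
  { apply Hlip; [lra| apply Hbd; lra| apply Hbd; rewrite Rminus_diag, Rabs_R0; lra]. }
  set (q := eps / (2 * B + 2)) in *.
  assert (Heq : eps = q * (2 * B + 2)) by (unfold q; field; lra).
  assert (2 * B * Rabs (s - s0) <= 2 * B * q) by (apply Rmult_le_compat_l; lra).
  nra.
Qed.

Section Mpc.
Context {X : Type} (T : topology X).

Lemma M_pc (n : nat) (Hn : (1 <= n)%nat) : @M_bounded X (fin n) T -> pseudocompact T.
Proof.
  intros HM f Hf. apply NNPP. intro Hnb.
  assert (Hs : forall M, exists x, M < Rabs (f x)).
  { intro M. apply NNPP. intro Hno. apply Hnb. exists M. intro x.
    apply Rnot_lt_le. intro Hx. apply Hno; eauto. }
  set (sel := fun M => proj1_sig (constructive_indefinite_description _ (Hs M))).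
  assert (Hsel : forall M, M < Rabs (f (sel M))).
  { intro M. unfold sel. destruct (constructive_indefinite_description _ (Hs M)); simpl; auto. }
  set (g := fun y => Rabs (f y)).
  set (xs := xseq g sel).
  set (i0 := (exist _ 0%nat Hn : fin n)).
  destruct (HM (fun k => Ub T (xs k) i0) (fun k => Ub_nbhd T (xs k) i0)) as [A [HA HAx]].
  set (t := fun k => g (xs k)).
  set (r := fun k => 1 + mx (A k) (xs k) i0).
  assert (Hsp : forall j k, j <> k -> 2 <= Rabs (t j - t k)).
  { intros j k Hjk. destruct (Nat.lt_gt_cases j k) as [[Hl|Hl] _]; auto.
    - pose proof (xseq_incr g sel Hsel j k Hl). unfold t, xs.
      rewrite Rabs_minus_sym, Rabs_right; lra.
    - pose proof (xseq_incr g sel Hsel k j Hl). unfold t, xs.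
      rewrite Rabs_right; lra. }
  assert (Htk : forall k, INR k <= t k) by (intro k; apply (xseq_ge g sel Hsel)).
  set (h := fun (y : X) (_ : fin n) => phi t r (g y)).
  destruct (HAx h) as [k Hk].
  - apply coord_Cp. intro i. unfold h.
    apply (cl_comp T (phi t r) g).
    + apply cl_abs. apply cont_R_loc; auto.
    + apply phi_cont; auto.
  - apply (escape T (A k) (xs k) i0 h); auto.
    intros a Ha. unfold h. fold (t k).
    rewrite (phi_in t r Hsp (t k) k) by (rewrite Rminus_diag, Rabs_R0; lra).
    rewrite Rminus_diag, Rabs_R0, Rmult_0_r, Rminus_0_r, Rmult_1_r.
    eapply Rle_trans; [|apply Rle_abs]. unfold r. pose proof (mx_ge (A k) (xs k) i0 a Ha). lra.
Qed.

End Mpc.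

Theorem mainTheorem10 :
  (forall (X : Type) (T : topology X) (n : nat), tychonoff T -> (1 <= n)%nat ->
     (@strictly_H_bounded X (fin n) T <-> @H_bounded X (fin n) T) /\
     (@H_bounded X (fin n) T <-> @strictly_M_bounded X (fin n) T) /\
     (@strictly_M_bounded X (fin n) T <-> @M_bounded X (fin n) T) /\
     (@M_bounded X (fin n) T <-> pseudocompact T)) /\
  (forall (X : Type) (T : topology X), tychonoff T -> inhabited X ->
     ~ @H_bounded X nat T).
Proof.
  split.
  - intros X T n HT Hn.
    assert (SH_H : @strictly_H_bounded X (fin n) T -> @H_bounded X (fin n) T).
    { intros [sigma Hs] U HU. exists (fun m => sigma (history U m)).
      destruct (Hs U HU); split; auto. }
    assert (SH_SM : @strictly_H_bounded X (fin n) T -> @strictly_M_bounded X (fin n) T).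
    { intros [sigma Hs]. exists sigma. intros U HU. destruct (Hs U HU) as [H1 H2].
      split; auto. intros x Hx. destruct (H2 x Hx) as [N HN]. exists N. apply HN. lia. }
    assert (SM_M : @strictly_M_bounded X (fin n) T -> @M_bounded X (fin n) T).
    { intros [sigma Hs] U HU. exists (fun m => sigma (history U m)).
      destruct (Hs U HU); split; auto. }
    assert (H_M : @H_bounded X (fin n) T -> @M_bounded X (fin n) T).
    { intros HH U HU. destruct (HH U HU) as [A [HA HAx]]. exists A. split; auto.
      intros x Hx. destruct (HAx x Hx) as [N HN]. exists N. apply HN. lia. }
    pose proof (M_pc T n Hn) as Mpc.
    pose proof (pc_strictH T n HT) as pcSH.
    repeat split; tauto.
  - intros X T HT [x0]. apply (not_H_omega T x0).
Qed.
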